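(* Suppose $(T_i,U_i)$, $i=1,\dots,n$, are generated independently from the first level of the model with fixed primary parameters $\theta^\star=(\theta_1^\star,\dots,\theta_n^\star)$ and fixed nuisance parameters $\nu^\star=(\nu_1^\star,\dots,\nu_n^\star)$, and that Assumption 1 holds. Let $G(\nu^\star):=\frac1n\sum_{i=1}^n\delta_{\nu_i^\star}$. Then $P^{\mathrm{or}}(T_i,U_i,G(\nu^\star))$, $i=1,\dots,n$, are compound p-values, i.e. $$\sup_{\alpha\in[0,1]}\Big(\frac1n\sum_{i\in\mathcal H_0}\mathbb P_{\nu^\star,\theta^\star}\big(P^{\mathrm{or}}(T_i,U_i,G(\nu^\star))\le\alpha\big)-\alpha\Big)_+\le0,$$ where $(x)_+=\max(x,0)$.
   Context: Setup: unit $i$'s data are summarized by $T_i\in\mathbb R$ and $U_i\in\mathcal U$; conditionally on parameters the pairs are independent, the law of $(T_i,U_i)$ depends only on $(\theta_i,\nu_i)$ through a common kernel, and the law of $U_i$ depends only on $\nu_i\in\mathcal V$. A null value $\theta_0$ is fixed, $\mathcal H_0=\{i:\theta_i^\star=\theta_0\}$. For a probability measure $G$ on $\mathcal V$, $P^{\mathrm{or}}(t,u,G):=\mathbb P(|T|\ge|t|\mid U=u)$ where $(T,U)$ is drawn with $\theta=\theta_0$ and $\nu\sim G$. $\mathbb P_{\nu^\star,\theta^\star}$ denotes probability with all parameters fixed. Assumption 1: for all $\nu,u$, the conditional law of $T_i$ given $\nu_i=\nu,U_i=u$ (under $\theta_i=\theta_0$) is absolutely continuous w.r.t. Lebesgue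 measure. *)

(* Defs.v *)
From HB Require Import structures.
From mathcomp Require Import all_boot all_order all_algebra.
From mathcomp Require Import all_classical all_reals all_analysis measurable_realfun.
Set Implicit Arguments. Unset Strict Implicit. Unset Printing Implicit Defensive.
Import Order.TTheory GRing.Theory Num.Theory.
Import numFieldNormedType.Exports.
Local Open Scope classical_set_scope.
Local Open Scope ring_scope.

(* [q] is a version of the regular conditional law of T given U, where
   (T,U) has joint law [mu] on R * U: q is a probability kernel U -> R and
   mu(A x B) = \int_{U in B} q(U)(A) dmu. *)
Definition is_cond_law (R : realType) (dU : measure_display) (U : measurableType dU)
  (mu : {measure set (R * U)%type -> \bar R}) (q : U -> probability R R) : Prop :=
  (forall A : set R, measurable A -> measurable_fun [set: U] (fun u : U => (q u A : \bar R))) /\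
  (forall (A : set R) (B : set U), measurable A -> measurable B ->
     mu (A `*` B) = (\int[mu]_(x in [set: R] `*` B) q x.2 A)%E).

(* the n-point mixture under the null: (T,U) drawn with theta = theta0 and
   nu ~ G(nu) = (1/n) sum_{k<n} delta_{nu k} *)
Definition null_mixture (R : realType) (dU : measure_display) (U : measurableType dU)
  (Th V : Type) (K : Th -> V -> probability (R * U)%type R) (th0 : Th)
  (n : nat) (nu : nat -> V) : {measure set (R * U)%type -> \bar R} :=
  mscale (n%:R^-1)%:nng
    (msum (fun k => (K th0 (nu k) : {measure set (R * U)%type -> \bar R})) n).

(* oracle p-value P^or(t,u,G) = P(|T| >= |t| | U = u), computed from a
   version q of the conditional law of T given U under the mixture *)
Definition Por (R : realType) (dU : measure_display) (U : measurableType dU)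
  (q : U -> probability R R) (t : R) (u : U) : R :=
  fine (q u [set s : R | `|t| <= `|s|]).

Definition mutually_independent (R : realType) (dO : measure_display)
  (Om : measurableType dO) (P : probability Om R) (dU : measure_display)
  (U : measurableType dU) (n : nat) (X : nat -> Om -> (R * U)%type) : Prop :=
  forall A : nat -> set (R * U)%type, (forall i, (i < n)%N -> measurable (A i)) ->
    P (\bigcap_(i in `I_n) (X i @^-1` A i)) = (\prod_(i < n) P (X i @^-1` A i))%E.

(* Main.v *)
Require Import Defs.
From HB Require Import structures.
From mathcomp Require Import all_boot all_order all_algebra.
From mathcomp Require Import all_classical all_reals all_analysis measurable_realfun.
Import Order.TTheory GRing.Theory Num.Theory.
Import numFieldNormedType.Exports.
Local Open Scope classical_set_scope.
Local Open Scope ring_scope.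

Section disint.
Local Open Scope ereal_scope.
Context (R : realType) (dU : measure_display) (U : measurableType dU).
Variables (M : {measure set (R * U)%type -> \bar R}) (q : U -> probability R R).
Hypothesis hq : is_cond_law M q.
Hypothesis M1 : M setT = 1.

Definition phi (C : set (R * U)%type) (u : U) : \bar R := q u (ysection C u).

Lemma disint : forall C, measurable C ->
  measurable_fun [set: U] (phi C) /\ M C = \int[M]_x phi C x.2.
Proof.
pose G := [set A `*` B | A in @measurable _ R & B in @measurable _ U].
pose P := [set C | measurable_fun [set: U] (phi C) /\ M C = \int[M]_x phi C x.2].
have GE : @measurable _ (R*U)%type = <<s G >> by exact: measurable_prod_measurableType.
suff : forall C, <<s G >> C -> P C by move=> + C mC; rewrite GE in mC => /(_ C mC).
apply: dynkin_induction => //.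
- move=> _ _ [X1 mX1 [X2 mX2 <-]] [Y1 mY1 [Y2 mY2 <-]].
  exists (X1 `&` Y1); first exact: measurableI.
  by exists (X2 `&` Y2); [exact: measurableI|rewrite setXI].
- have phiT : phi setT = cst 1.
    apply/funext => u; rewrite /phi /=.
    have -> : ysection [set: R * U] u = [set: R] by apply/funext => x; apply/propext; split => // _; rewrite /ysection /= inE.
    exact: probability_setT.
  split; first by rewrite phiT; exact: measurable_cst.
  rewrite M1 (_ : (fun x => phi setT x.2) = cst 1); last by rewrite phiT.
  by rewrite integral_cst// mul1e M1.
- move=> _ [A mA [B mB <-]].
  have phiAB : phi (A `*` B) = (fun u => q u A * (\1_B u)%:E).
    apply/funext => u; rewrite /phi indicE.
    have [uB|uB] := boolP (u \in B); first by rewrite mule1 in_ysectionX.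
    by rewrite mule0 notin_ysectionX.
  split.
    rewrite phiAB; apply: emeasurable_funM; first exact: hq.1.
    by apply/measurable_EFinP; rewrite (_ : \1_ _ = mindic R mB).
  rewrite hq.2// integral_mkcond; apply: eq_integral => x _.
  rewrite /patch phiAB /= indicE.
  have [xB|xB] := boolP (x \in [set: R] `*` B).
    by rewrite mem_set ?mule1//; move: xB; rewrite inE => -[].
  rewrite memNset ?mule0//; move=> x2B; move: xB; rewrite notin_setE; apply.
  by split.
- move=> S mS [mphiS MS].
  have phiC : phi (~` S) = (fun u => 1 - phi S u).
    apply/funext => u; rewrite /phi.
    have -> : ysection (~` S) u = ~` ysection S u.
      by apply/seteqP; split => x; rewrite /ysection /= !inE.
    by rewrite probability_setC//; exact: measurable_ysection.
  have phiS01 u : 0 <= phi S u <= 1.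
    by rewrite measure_ge0 /= probability_le1//; exact: measurable_ysection.
  have intS : \int[M]_x phi S x.2 \is a fin_num.
    rewrite -MS ge0_fin_numE// (le_lt_trans _ (ltry 1)) // -M1.
    by apply: le_measure; rewrite ?inE//; exact: measurableT.
  have mphiC : measurable_fun [set: U] (phi (~` S)).
    rewrite phiC; apply: emeasurable_funB => //; exact: measurable_cst.
  split => //.
  have : \int[M]_x phi (~` S) x.2 + \int[M]_x phi S x.2 = 1.
    rewrite -ge0_integralD//.
    + rewrite (_ : (fun x => _) = cst 1); first by rewrite integral_cst// mul1e M1.
      apply/funext => x; rewrite phiC /= subeK//.
      have /andP[h1 h2] := phiS01 x.2.
      by rewrite ge0_fin_numE// (le_lt_trans h2) ?ltry.
    + exact: measurableT_comp mphiC measurable_snd.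
    + exact: measurableT_comp mphiS measurable_snd.
  move=> h; rewrite -(addeK (\int[M]_x phi (~` S) x.2) intS) h -MS.
  rewrite -M1 -[in RHS](setvU S) measureU//.
  - by rewrite addeK//; move: intS; rewrite -MS.
  - exact: measurableC.
  - exact: setICl.
- move=> F mF tF PF.
  have phiU : phi (\bigcup_k F k) = fun u => \sum_(n <oo) phi (F n) u.
    apply/funext => u; rewrite /phi ysection_bigcup measure_semi_bigcup//.
    - by move=> n; exact: measurable_ysection.
    - exact: trivIset_ysection.
    - rewrite -ysection_bigcup; apply: measurable_ysection.
      exact: bigcup_measurable.
  have mphiU : measurable_fun [set: U] (phi (\bigcup_k F k)).
    rewrite phiU (_ : (fun u => _) = (fun u => \sum_(i <oo | i \in xpredT) phi (F i) u)) //.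
    apply: ge0_emeasurable_sum => //.
    by move=> k _; exact: (PF k).1.
  split => //.
  rewrite measure_semi_bigcup//; last exact: bigcup_measurable.
  rewrite phiU /= integral_nneseries//.
  + by apply: eq_eseriesr => k _; exact: (PF k).2.
  + by move=> k; apply: measurableT_comp (PF k).1 measurable_snd.
Qed.
End disint.
Section surv.
Context (R : realType).

Lemma mTl (x : R) : measurable [set s : R | x <= `|s|].
Proof.
rewrite (_ : [set s | _] = setT `&` (@Num.norm _ R) @^-1` `[x, +oo[).
  exact: normr_measurable (measurable_itv _).
by rewrite setTI; apply/funext => s /=; rewrite in_itv /= andbT.
Qed.

Lemma surv (mu : probability R R) (a : R) :
  (0 <= a) -> measurable [set t : R | fine (mu [set s | `|t| <= `|s|]) <= a] ->
  (mu [set t : R | (fine (mu [set s : R | (`|t| <= `|s|)%R]) <= a)%R] <= a%:E)%E.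
Proof.
set D := [set t | _] => a0 mD.
pose Tl (x : R) := [set s : R | x <= `|s|].
pose S x := fine (mu (Tl x)).
have SE x : mu (Tl x) = (S x)%:E.
  by rewrite fineK// ge0_fin_numE// (le_lt_trans (probability_le1 _ (mTl x))) ?ltry.
have Smono x y : x <= y -> S y <= S x.
  move=> xy; rewrite -lee_fin -!SE; apply: le_measure; rewrite ?inE; try exact: mTl.
  by move=> s /=; exact: le_trans.
have [D0|/set0P[t1 Dt1]] := eqVneq D set0; first by rewrite D0 measure0 lee_fin.
pose E := [set `|t| | t in D].
have lbE : has_lbound E by exists 0 => _ [t _ <-]; exact: normr_ge0.
have nE : E !=set0 by exists `|t1|, t1.
have [Einf | nEinf] := pselect (E (inf E)).
  case: Einf => t0 Dt0 t0E.
  apply: (@le_trans _ _ (mu (Tl `|t0|))).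
    apply: le_measure; rewrite ?inE //; first exact: mTl.
    by move=> s Ds /=; rewrite t0E; apply: ge_inf => //; exists s.
  by rewrite SE lee_fin.
have Eg := inf_lb_strict lbE nEinf.
set r0 := inf E in Eg.
pose A k := Tl (r0 + k.+1%:R^-1).
have AD k : (mu (A k) <= a%:E)%E.
  rewrite /A SE lee_fin.
  have hr : r0 < r0 + k.+1%:R^-1 by rewrite ltrDl invr_gt0 ltr0n.
  have [y Ey ylt] := @inf_lt _ E (r0 + k.+1%:R^-1) nE hr.
  case: Ey => t Dt tE; apply: le_trans (Smono _ _ (ltW _)) Dt.
  by rewrite tE.
have DA : D `<=` \bigcup_k A k.
  move=> s Ds; have r0s : r0 < `|s| by apply: Eg; exists s.
  have [k hk] := ltr_add_invr r0s.
  by exists k => //; rewrite /A /Tl /=; exact: ltW.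
have mA k : measurable (A k) by exact: mTl.
have mUA : measurable (\bigcup_k A k) by exact: bigcup_measurable.
apply: (@le_trans _ _ (mu (\bigcup_k A k))).
  by apply: le_measure; rewrite ?inE.
have ndA : nondecreasing_seq A.
  move=> k m km; apply/subsetPset => s; rewrite /A /Tl /=; apply: le_trans.
  rewrite lerD2l lef_pV2 ?posrE ?ler_nat//.
have := nondecreasing_cvg_mu (mu := mu) mA mUA ndA.
move=> h; rewrite -(cvg_lim _ h)//.
apply: lime_le; first exact: cvgP h.
by apply: nearW => k; exact: AD.
Qed.
End surv.
Lemma le_of_forall_inv (R : realType) (x a : R) :
  (forall m : nat, x <= a + m.+1%:R^-1) -> x <= a.
Proof.
move=> H; rewrite leNgt; apply/negP => ax.
have [k hk] := ltr_add_invr ax.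
by move: (H k); rewrite leNgt hk.
Qed.

Section mC0.
Context (R : realType) (dU : measure_display) (U : measurableType dU).
Variable q : U -> probability R R.
Hypothesis hqm : forall A : set R, measurable A ->
  measurable_fun [set: U] (fun u : U => (q u A : \bar R)).

Lemma mTl' (x : R) : measurable [set s : R | x <= `|s|].
Proof.
rewrite (_ : [set s | _] = setT `&` (@Num.norm _ R) @^-1` `[x, +oo[).
  exact: normr_measurable (measurable_itv _).
by rewrite setTI; apply/funext => s /=; rewrite in_itv /= andbT.
Qed.

Lemma mTlt (x : R) : measurable [set s : R | x < `|s|].
Proof.
rewrite (_ : [set s | _] = setT `&` (@Num.norm _ R) @^-1` `]x, +oo[).
  exact: normr_measurable (measurable_itv _).
by rewrite setTI; apply/funext => s /=; rewrite in_itv /= andbT.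
Qed.

Let Tl (x : R) := [set s : R | x <= `|s|].

Let qfin u x : (q u (Tl x) = (fine (q u (Tl x)))%:E)%E.
Proof.
by rewrite fineK// ge0_fin_numE// (le_lt_trans (probability_le1 _ (mTl' x))) ?ltry.
Qed.

Lemma mC0 (a : R) : measurable [set x : R * U | Por q x.1 x.2 <= a].
Proof.
pose B (m : nat) (p : rat) := [set t : R | ratr p < `|t|] `*`
   [set u | fine (q u (Tl (ratr p))) < a + m.+1%:R^-1].
have mB m p : measurable (B m p).
  apply: measurableX; first exact: mTlt.
  rewrite (_ : [set u | _] = setT `&` [set u | (q u (Tl (ratr p)) < (cst (a + m.+1%:R^-1)%:E) u)%E]).
    apply: measurable_lte => //; try exact: hqm (mTl' _); exact: measurable_cst.
  by rewrite setTI; apply/funext => u /=; rewrite [in RHS]qfin lte_fin.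
rewrite (_ : [set x | _] = \bigcap_m \bigcup_p B m p).
  by apply: bigcapT_measurable => m; exact: bigcupT_measurable_rat.
apply/funext => -[t u] /=; apply/propext; split.
- move=> Pa m _.
  pose F k := Tl (`|t| - k.+1%:R^-1).
  have mF k : measurable (F k) by exact: mTl'.
  have FE : \bigcap_k F k = Tl `|t|.
    apply/funext => s; apply/propext; split => /=.
      move=> h; apply: le_of_forall_inv => k; rewrite -lerBlDr; exact: h.
    move=> h k _; rewrite /F /Tl /=; apply: le_trans h; rewrite lerBlDr lerDl invr_ge0 ler0n//.
  have niF : nonincreasing_seq F.
    move=> k l kl; apply/subsetPset => s; rewrite /F /Tl /=; apply: le_trans.
    by rewrite lerD2l lerN2 lef_pV2 ?posrE ?ler_nat.
  have F0 : (q u (F 0%N) < +oo)%E by rewrite qfin ltry.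
  have h := nonincreasing_cvg_mu F0 mF (bigcapT_measurable mF) niF.
  rewrite FE in h.
  have lt1 : (q u (Tl `|t|) < (a + m.+1%:R^-1)%:E)%E.
    rewrite qfin lte_fin (le_lt_trans Pa)// ltrDl invr_gt0 ltr0n//.
  have [N _ HN] := h _ (open_ereal_lt' lt1).
  have /HN /= hN := leqnn N.
  have hN1 : `|t| - N.+1%:R^-1 < `|t| by rewrite ltrBlDr ltrDl invr_gt0 ltr0n.
  have [p] := @rat_in_itvoo R _ _ hN1.
  rewrite in_itv /= => /andP[p1 p2].
  exists p => //; split => //=.
  rewrite -lte_fin -qfin; apply: le_lt_trans hN.
  by apply: le_measure; rewrite ?inE; [exact: mTl'|exact: mTl'| move=> s /=; apply: le_trans; exact: ltW].
- move=> H; apply: le_of_forall_inv => m.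
  have [p _ [/= p1 p2]] := H m I.
  apply: ltW; apply: le_lt_trans p2.
  rewrite /Por -lee_fin -qfin -qfin; apply: le_measure; rewrite ?inE; try exact: mTl'.
  by move=> s /=; apply: le_trans; exact: ltW.
Qed.
End mC0.

Theorem proposition5
  (R : realType) (dO : measure_display) (Om : measurableType dO) (P : probability Om R)
  (dU : measure_display) (U : measurableType dU) (Th V : Type)
  (K : Th -> V -> probability (R * U)%type R)
  (law_U_nu_only : forall (th th' : Th) (v : V) (B : set U), measurable B ->
     K th v ([set: R] `*` B) = K th' v ([set: R] `*` B))
  (th0 : Th) (n : nat) (n_gt0 : (0 < n)%N)
  (theta : nat -> Th) (nu : nat -> V) (X : nat -> Om -> (R * U)%type)
  (X_meas : forall i, (i < n)%N -> measurable_fun [set: Om] (X i))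
  (X_indep : mutually_independent P n X)
  (X_law : forall i, (i < n)%N -> forall A : set (R * U)%type, measurable A ->
     P (X i @^-1` A) = K (theta i) (nu i) A)
  (assumption1 : exists kappa : V -> U -> probability R R,
     forall v : V, is_cond_law (K th0 v : {measure set (R * U)%type -> \bar R}) (kappa v) /\
       forall u : U, kappa v u `<< (@lebesgue_measure R))
  (q : U -> probability R R)
  (hq : is_cond_law (null_mixture K th0 n nu) q) :
  (ereal_sup [set maxe ((n%:R^-1)%:E *
        (\sum_(i < n | `[< theta i = th0 >])
           P [set w | (Por q (X i w).1 (X i w).2 <= alpha)%R]) - alpha%:E) 0
     | alpha in `[0%R, 1%R]] <= 0)%E.
Proof.
set M := null_mixture K th0 n nu.
have M1 : M setT = 1%E.
  rewrite /M /null_mixture /= /mscale /msum /=.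
  rewrite /msum (eq_bigr (fun=> 1%E)); last by move=> k _; exact: probability_setT.
  rewrite sumEFin /= sumr_const card_ord -EFinM mulVf// pnatr_eq0 -lt0n //.
apply: ub_ereal_sup => _ [a /= a01 <-].
move: a01; rewrite in_itv /= => /andP[a0 a1].
set C0 := [set x : R * U | Por q x.1 x.2 <= a].
have mC : measurable C0 by exact: (@mC0 _ _ _ q hq.1 a).
have MC : (M C0 <= a%:E)%E.
  have [mphi ->] := @disint _ _ _ M q hq M1 _ mC.
  apply: (@le_trans _ _ (\int[M]_x (cst a%:E) x)%E).
    apply: ge0_le_integral => //.
    - exact: measurableT_comp mphi measurable_snd.
    - move=> [t u] _ /=; rewrite /phi.
      have -> : ysection C0 u = [set t : R | (fine (q u [set s : R | (`|t| <= `|s|)%R]) <= a)%R].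
        by apply/funext => s; rewrite /ysection /C0 /= inE.
      apply: surv => //.
      rewrite (_ : [set t | _] = ysection C0 u); first exact: measurable_ysection.
      by apply/funext => s; rewrite /ysection /C0 /= inE.
  by rewrite integral_cst// M1 mule1.
rewrite ge_max lexx andbT EFinN sube_le0.
apply: le_trans MC.
have -> : M C0 = ((n%:R^-1)%:E * \sum_(k < n) K th0 (nu k) C0)%E by [].
rewrite lee_pmul2l ?lte_fin ?invr_gt0 ?ltr0n //.
rewrite [X in (_ <= X)%E](bigID (fun i : 'I_n => `[< theta i = th0 >])) /=.
rewrite -[X in (X <= _)%E]adde0; apply: leeD.
  apply: lee_sum => i /asboolP hi.
  by rewrite -hi -X_law.
by apply: sume_ge0 => i _; exact: measure_ge0.
Qed.
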